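(* Let $G$ be a countable group which is icc or torsion-free, and let $A$ be a finite set. Then every strongly irreducible subshift $Z\subseteq A^G$ containing a non-constant element is essentially free.
   Context: $A^G$ has the product topology and the action $(g\cdot z)(h)=z(hg)$; a subshift is a non-empty closed $G$-invariant subset. For finite $D\subseteq G$, two sets $E_1,E_2\subseteq G$ are $D$-apart if $DE_1\cap DE_2=\emptyset$. A subshift $Z$ is strongly irreducible if there is a finite $D\subseteq G$ such that for all finite $E_1,E_2\subseteq G$ that are $D$-apart and all $z_1,z_2\in Z$, there is $x\in Z$ with $x|_{E_i}=z_i|_{E_i}$ for $i=1,2$. A flow is essentially free if for every $g\neq e$ the set of points fixed by $g$ has empty interior. A group is icc if every non-identity element has infinite conjugacy class. *)

(* Defs.v *)
From Stdlib Require Import List Arith.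
Import ListNotations.


Record Group := {
  carrier :> Type;
  gmul : carrier -> carrier -> carrier;
  gone : carrier;
  ginv : carrier -> carrier;
  gmulA : forall x y z, gmul x (gmul y z) = gmul (gmul x y) z;
  gmul1l : forall x, gmul gone x = x;
  gmulVl : forall x, gmul (ginv x) x = gone
}.

Section Defs.
Variable G : Group.
Notation "x * y" := (gmul G x y).

Definition countable_type (T : Type) : Prop :=
  exists f : T -> nat, forall x y, f x = f y -> x = y.

Definition finite_type (T : Type) : Prop := exists l : list T, forall a, In a l.

Definition finite_set {T : Type} (S : T -> Prop) : Prop :=
  exists l : list T, forall x, S x -> In x l.

Fixpoint gpow (g : G) (n : nat) : G :=
  match n with 0 => gone G | S k => g * gpow g k end.

Definition conj_class (g : G) : G -> Prop :=
  fun x => exists h, x = h * (g * ginv G h).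

Definition icc : Prop :=
  forall g : G, g <> gone G -> ~ @finite_set G (conj_class g).

Definition torsion_free : Prop :=
  forall (g : G) (n : nat), g <> gone G -> 0 < n -> gpow g n <> gone G.

Variable A : Type.

Definition shift (g : G) (z : G -> A) : G -> A := fun h => z (h * g).

(* product topology on A^G (A discrete): U is open iff each point of U has
   a cylinder neighbourhood, determined by finitely many coordinates, inside U *)
Definition agree_on (F : list G) (x y : G -> A) : Prop :=
  forall h, In h F -> x h = y h.

Definition is_open (U : (G -> A) -> Prop) : Prop :=
  forall x, U x -> exists F : list G, forall y, agree_on F x y -> U y.

Definition is_closed (C : (G -> A) -> Prop) : Prop :=
  is_open (fun x => ~ C x).

Definition subshift (Z : (G -> A) -> Prop) : Prop :=
  (exists z, Z z) /\ is_closed Z /\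
  (forall g z, Z z -> Z (shift g z)).

Definition apart (D E1 E2 : list G) : Prop :=
  forall d1 e1 d2 e2, In d1 D -> In e1 E1 -> In d2 D -> In e2 E2 ->
    d1 * e1 <> d2 * e2.

Definition strongly_irreducible (Z : (G -> A) -> Prop) : Prop :=
  exists D : list G, forall E1 E2 : list G, apart D E1 E2 ->
    forall z1 z2, Z z1 -> Z z2 ->
      exists x, Z x /\ agree_on E1 x z1 /\ agree_on E2 x z2.

(* interior in the subspace topology of Z: V (subset of Z) has empty interior
   in Z iff every relatively open set U ∩ Z contained in V is empty *)
Definition empty_interior_in (Z V : (G -> A) -> Prop) : Prop :=
  forall U, is_open U -> (forall x, U x -> Z x -> V x) ->
    forall x, ~ (U x /\ Z x).

Definition fixed_in (Z : (G -> A) -> Prop) (g : G) : (G -> A) -> Prop :=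
  fun z => Z z /\ shift g z = z.

Definition essentially_free (Z : (G -> A) -> Prop) : Prop :=
  forall g : G, g <> gone G -> empty_interior_in Z (fixed_in Z g).

Definition nonconstant (z : G -> A) : Prop := exists h1 h2, z h1 <> z h2.

End Defs.

(* Main.v *)
Require Import Defs.
From Stdlib Require Import List Arith Lia FinFun Classical.
Import ListNotations.

Section Aux.
Variable G : Group.
Local Notation "x ⋅ y" := (gmul G x y) (at level 40, left associativity).
Local Notation e := (gone G).
Local Notation inv := (ginv G).

Lemma mulVr (x : G) : x ⋅ inv x = e.
Proof.
  rewrite <- (gmul1l G (x ⋅ inv x)).
  rewrite <- (gmulVl G (inv x)) at 1.
  rewrite <- gmulA. rewrite (gmulA G (inv x) x (inv x)). rewrite gmulVl, gmul1l.
  apply gmulVl.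
Qed.

Lemma mul1r (x : G) : x ⋅ e = x.
Proof. rewrite <- (gmulVl G x), gmulA, mulVr, gmul1l. reflexivity. Qed.

Lemma solve1 (a b c : G) : a ⋅ b = c -> b = inv a ⋅ c.
Proof. intros <-. rewrite gmulA, gmulVl, gmul1l. reflexivity. Qed.

Lemma solve2 (a b c : G) : a ⋅ b = c -> a = c ⋅ inv b.
Proof. intros <-. rewrite <- gmulA, mulVr, mul1r. reflexivity. Qed.

Lemma gpow_add (g : G) a b : gpow G g (a + b) = gpow G g a ⋅ gpow G g b.
Proof.
  induction a; simpl. now rewrite gmul1l. rewrite IHa, gmulA. reflexivity.
Qed.

Lemma gpow_inj (g : G) : torsion_free G -> g <> e -> Injective (gpow G g).
Proof.
  intros T gne.
  assert (K : forall a k, gpow G g a = gpow G g (a + k) -> k = 0).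
  { intros a k H. destruct k as [|k]; [reflexivity|].
    exfalso. rewrite gpow_add in H. symmetry in H.
    apply solve1 in H. rewrite gmulVl in H.
    apply (T g (S k) gne); [lia|]. congruence. }
  intros a b H. destruct (le_lt_dec a b).
  - replace b with (a + (b - a)) in H by lia. apply K in H. lia.
  - replace a with (b + (a - b)) in H by lia. symmetry in H. apply K in H. lia.
Qed.

Lemma gpow_avoid (g : G) (L : list G) : torsion_free G -> g <> e ->
  exists n, ~ In (gpow G g n) L.
Proof.
  intros T gne. apply NNPP. intro H.
  assert (Hi : incl (map (gpow G g) (seq 0 (S (length L)))) L).
  { intros x Hx. apply in_map_iff in Hx. destruct Hx as [n [<- _]].
    apply NNPP. intro Hn. apply H. exists n. exact Hn. }
  apply NoDup_incl_length in Hi.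
  - rewrite length_map, length_seq in Hi. lia.
  - apply Injective_map_NoDup. apply gpow_inj; auto. apply seq_NoDup.
Qed.

Definition Cl (D : list G) : list G :=
  flat_map (fun a => map (fun b => inv b ⋅ a) D) D.
Definition Bl (D F : list G) : list G :=
  flat_map (fun a => flat_map (fun b => map (fun f => inv b ⋅ (a ⋅ f)) F) D) D.

Variable A : Type.

Lemma fixpow (g : G) (y : G -> A) : shift G A g y = y ->
  forall n p, y (p ⋅ gpow G g n) = y p.
Proof.
  intros Hf n. induction n; intro p; simpl.
  - now rewrite mul1r.
  - rewrite gmulA, IHn. change (shift G A g y p = y p). now rewrite Hf.
Qed.

Lemma core (Z : (G -> A) -> Prop) (g : G) (x u : G -> A) (F D : list G) p n :
  (forall E1 E2, apart G D E1 E2 -> forall z1 z2, Z z1 -> Z z2 ->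
     exists x, Z x /\ agree_on G A E1 x z1 /\ agree_on G A E2 x z2) ->
  (forall y, agree_on G A F x y -> Z y -> shift G A g y = y) -> Z x -> Z u ->
  u (p ⋅ gpow G g n) <> x (p ⋅ gpow G g n) ->
  ~ In (p ⋅ (gpow G g n ⋅ inv p)) (Cl D) -> ~ In (p ⋅ gpow G g n) (Bl D F) -> False.
Proof.
  intros SI Hfix Zx Zu Hne nC nB.
  set (q := p ⋅ gpow G g n) in *.
  destruct (SI (F ++ [p]) [q]) with (z1 := x) (z2 := u) as [y [Zy [A1 A2]]];
    auto.
  - intros d1 e1 d2 e2 H1 He1 H2 He2 Heq.
    destruct He2 as [He2|[]]. subst e2.
    apply in_app_or in He1. destruct He1 as [He1|[He1|[]]].
    + apply nB. symmetry in Heq. apply solve1 in Heq. rewrite Heq.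
      unfold Bl. apply in_flat_map. exists d1. split; auto.
      apply in_flat_map. exists d2. split; auto.
      apply in_map_iff. exists e1. auto.
    + subst e1. apply nC. symmetry in Heq. apply solve1 in Heq.
      rewrite gmulA in Heq. symmetry in Heq. apply solve2 in Heq.
      unfold q in Heq. rewrite <- gmulA in Heq. rewrite <- Heq.
      unfold Cl. apply in_flat_map. exists d1. split; auto.
      apply in_map_iff. exists d2. auto.
  - assert (Fy : shift G A g y = y).
    { apply Hfix; auto. intros h Hh. symmetry. apply A1. apply in_or_app; auto. }
    assert (Fx : shift G A g x = x) by (apply Hfix; auto; intros h _; auto).
    apply Hne.
    rewrite <- (A2 q) by (left; auto).
    unfold q. rewrite (fixpow g y Fy), (fixpow g x Fx).
    apply A1. apply in_or_app. right. left. auto.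
Qed.

End Aux.

Theorem proposition5p5 (G : Group) (A : Type) :
  countable_type G -> (icc G \/ torsion_free G) -> finite_type A ->
  forall Z : (G -> A) -> Prop,
    subshift G A Z -> strongly_irreducible G A Z ->
    (exists z, Z z /\ nonconstant G A z) ->
    essentially_free G A Z.
Proof.
  intros _ Hg _ Z [_ [_ Sinv]] [D SI] [z [Zz [h1 [h2 Hh]]]] g gne U Uo Hsub x [Ux Zx].
  destruct (Uo x Ux) as [F HF].
  assert (Hfix : forall y, agree_on G A F x y -> Z y -> shift G A g y = y).
  { intros y Ha Zy. apply (Hsub y (HF y Ha) Zy). }
  assert (Zsh : forall k, Z (shift G A k z)).
  { intro k. apply Sinv. exact Zz. }
  assert (Hu : forall q, exists u, Z u /\ u q <> x q).
  { intro q.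
    destruct (classic (z h1 = x q)) as [E|E].
    - exists (shift G A (gmul G (ginv G q) h2) z). split; auto.
      unfold shift. rewrite gmulA, mulVr, gmul1l. congruence.
    - exists (shift G A (gmul G (ginv G q) h1) z). split; auto.
      unfold shift. rewrite gmulA, mulVr, gmul1l. auto. }
  assert (Main : forall p n, ~ In (gmul G p (gmul G (gpow G g n) (ginv G p))) (Cl G D) ->
             ~ In (gmul G p (gpow G g n)) (Bl G D F) -> False).
  { intros p n nC nB. destruct (Hu (gmul G p (gpow G g n))) as [u [Zu Hne]].
    exact (core G A Z g x u F D p n SI Hfix Zx Zu Hne nC nB). }
  destruct Hg as [Hicc | Htf].
  - apply (Hicc g gne).
    exists (Cl G D ++ map (fun b => gmul G (gmul G b (ginv G g))
                 (gmul G g (ginv G (gmul G b (ginv G g))))) (Bl G D F)).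
    intros y [h ->].
    destruct (classic (In (gmul G h (gmul G g (ginv G h))) (Cl G D))) as [I|I].
    + apply in_or_app; auto.
    + apply in_or_app. right.
      assert (IB : In (gmul G h g) (Bl G D F)).
      { apply NNPP. intro nB. apply (Main h 1); simpl; rewrite mul1r; auto. }
      apply in_map_iff. exists (gmul G h g). split; auto.
      rewrite <- (gmulA G h g (ginv G g)), mulVr, mul1r. reflexivity.
  - destruct (gpow_avoid G g (Cl G D ++ Bl G D F) Htf gne) as [n Hn].
    assert (inv1 : ginv G (gone G) = gone G).
    { rewrite <- (mul1r G (ginv G (gone G))). apply gmulVl. }
    apply (Main (gone G) n); rewrite ?inv1, ?mul1r, !gmul1l;
      intro I; apply Hn; apply in_or_app; auto.
Qed.
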